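(* Let $D$ be a finite set and $P:D^2\to\{0,1\}$ a binary predicate. Assume there exist two-element subsets $B,C\subseteq D$ such that $P|_{B\times C}$ is a singleton. Then for every positive integer $n$ there is an instance $I$ of $\mathrm{CSP}(P)$ with $2n$ variables and $n^2$ constraints such that for every $0<\varepsilon<1$, every $\varepsilon$-sparsifier of $I$ has $n^2$ constraints.
   Context: A binary CSP instance is $I=(V,D,\Pi,w)$ where $V$ is a finite set of variables, $D$ a finite domain, $\Pi$ a set of constraints, each a pair $\langle (u,v),P\rangle$ with $u,v\in V$ distinct and $P:D^2\to\{0,1\}$, and $w:\Pi\to\mathbb{R}_{>0}$ positive weights. $\mathrm{CSP}(P)$ is the class of instances in which every constraint uses the predicate $P$. For an assignment $A:V\to D$, $\mathrm{Val}_I(A)=\sum_{\pi=\langle(u,v),P\rangle\in\Pi} w(\pi)P(A(u),A(v))$. For $0<\varepsilon<1$, an $\varepsilon$-sparsifier of $I$ is an instance $I_\varepsilon=(V,D,\Pi_\varepsilon,w_\varepsilon)$ with $\Pi_\varepsilon\subseteq\Pi$ and $w_\varepsilon:\Pi_\varepsilon\to\mathbb{R}_{>0}$ such that for every $A:V\to D$, $(1-\varepsilon)\mathrm{Val}_I(A)\le \mathrm{Val}_{I_\varepsilon}(A)\le(1+\varepsilon)\mathrm{Val}_I(A)$; its number of constraints is $|\Pi_\varepsilon|$. A predicate is a singleton if exactly one tuple is mapped to $1$. $P|_{B\times C}$ denotes the restriction of $P$ to $B\times C$. *)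

(* Defs.v *)
From mathcomp Require Import all_boot all_order all_algebra.
From mathcomp Require Import reals.
Set Implicit Arguments. Unset Strict Implicit. Unset Printing Implicit Defensive.
Import Order.TTheory GRing.Theory Num.Theory.
Local Open Scope ring_scope.

(* A binary CSP(P) instance on variable set V with real weights:
   since every constraint uses the fixed predicate P, a constraint
   <(u,v),P> is identified with the ordered pair (u,v).
   Pi is a *set* of such pairs; w gives the weight of each constraint
   (only its values on Pi matter). *)
Record instance (V : finType) (R : realType) := Instance {
  cons : {set V * V};
  wt : V * V -> R }.

Definition wf_instance (V : finType) (R : realType) (I : instance V R) : Prop :=
  forall c, c \in cons I -> c.1 != c.2 /\ 0 < wt I c.

Definition Val (V D : finType) (R : realType) (P : D -> D -> bool)
  (I : instance V R) (A : V -> D) : R :=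
  \sum_(c in cons I) wt I c * (P (A c.1) (A c.2))%:R.

Definition sparsifier (V D : finType) (R : realType) (P : D -> D -> bool)
  (eps : R) (I J : instance V R) : Prop :=
  cons J \subset cons I /\
  (forall c, c \in cons J -> 0 < wt J c) /\
  (forall A : V -> D,
     (1 - eps) * Val P I A <= Val P J A /\ Val P J A <= (1 + eps) * Val P I A).

(* Main.v *)
Require Import Defs.
From mathcomp Require Import all_boot all_order all_algebra.
From mathcomp Require Import reals.
From mathcomp Require Import zify.
Import Order.TTheory GRing.Theory Num.Theory.
Local Open Scope ring_scope.

Section Aux.
Variable n : nat.

Lemma lt_l (i : 'I_n) : (i < 2 * n)%N.
Proof. have := ltn_ord i; lia. Qed.
Lemma lt_r (j : 'I_n) : (n + j < 2 * n)%N.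
Proof. have := ltn_ord j; lia. Qed.

Definition fpair (p : 'I_n * 'I_n) : 'I_(2 * n) * 'I_(2 * n) :=
  (Ordinal (lt_l p.1), Ordinal (lt_r p.2)).

Lemma fpair_inj : injective fpair.
Proof.
move=> [i j] [i' j'] [] h1 h2.
have e1 : i = i' by apply: val_inj; exact: h1.
have e2 : j = j' by apply: val_inj; move: h2; rewrite /=; lia.
by rewrite e1 e2.
Qed.

Lemma fpair_mem c : c \in fpair @: setT -> (c.1 < n)%N /\ (n <= c.2)%N.
Proof.
case/imsetP=> [[i j] _ ->] /=; split; [exact: ltn_ord | exact: leq_addr].
Qed.
End Aux.

Theorem theorem3 (R : realType) (D : finType) (P : D -> D -> bool) :
  (exists B C : {set D},
     #|B| = 2%N /\ #|C| = 2%N /\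
     #|[set x in setX B C | P x.1 x.2]| = 1%N) ->
  forall n : nat, (0 < n)%N ->
  exists I : instance 'I_(2 * n) R,
    wf_instance I /\ #|cons I| = (n ^ 2)%N /\
    forall eps : R, 0 < eps < 1 ->
      forall J : instance 'I_(2 * n) R,
        sparsifier P eps I J -> #|cons J| = (n ^ 2)%N.
Proof.
move=> [B [C [hB [hC hS]]]] n n0.
have [[bs cs] hx] := cards1P (introT eqP hS).
have : (bs, cs) \in [set x in setX B C | P x.1 x.2] by rewrite hx set11.
rewrite !inE /= => /andP [/andP [bsB csC] Pbc].
have Puniq : forall b c, b \in B -> c \in C -> P b c -> b = bs /\ c = cs.
  move=> b c bB cC Pb.
  have : (b, c) \in [set x in setX B C | P x.1 x.2] by rewrite !inE /= bB cC Pb.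
  by rewrite hx inE => /eqP [-> ->].
have : #|B :\ bs| = 1%N by have := cardsD1 bs B; rewrite bsB hB; case.
move/eqP; case/cards1P=> b' hb'.
have : b' \in B :\ bs by rewrite hb' set11.
rewrite !inE => /andP [b'ne b'B].
have : #|C :\ cs| = 1%N by have := cardsD1 cs C; rewrite csC hC; case.
move/eqP; case/cards1P=> c' hc'.
have : c' \in C :\ cs by rewrite hc' set11.
rewrite !inE => /andP [c'ne c'C].
exists (Instance (@fpair n @: setT) (fun _ => (1 : R))).
split; [|split].
- move=> c /= /fpair_mem [h1 h2]; split; last exact: ltr01.
  apply/negP => /eqP e; move: h1 h2; rewrite e; by rewrite ltnNge => /negP.
- rewrite card_imset /=; last exact: fpair_inj.
  by rewrite cardsT card_prod card_ord mulnn.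
move=> eps /andP [e0 e1] J [sub [_ hval]].
suff -> : cons J = @fpair n @: setT.
  rewrite card_imset /=; last exact: fpair_inj.
  by rewrite cardsT card_prod card_ord mulnn.
apply/eqP; rewrite eqEsubset sub /=.
apply/subsetP => c cI; apply/negPn/negP => cJ.
have [c1 c2] := @fpair_mem n _ cI.
have {}c2 : (c.2 < n)%N = false by rewrite ltnNge c2.
pose A (x : 'I_(2 * n)) := if (x < n)%N then (if x == c.1 then bs else b')
                           else (if x == c.2 then cs else c').
have [h _] := hval A.
have VJ : Val P J A = 0.
  rewrite /Val big1 // => d dJ.
  have dI : d \in @fpair n @: setT := subsetP sub d dJ.
  have [d1 d2] := @fpair_mem n _ dI.
  have {}d2 : (d.2 < n)%N = false by rewrite ltnNge d2.
  suff -> : P (A d.1) (A d.2) = false by rewrite mulr0.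
  apply/negP => Pd.
  have AB : A d.1 \in B by rewrite /A d1; case: ifP.
  have AC : A d.2 \in C by rewrite /A d2 /=; case: ifP.
  have [e1' e2'] := Puniq _ _ AB AC Pd.
  move: e1' e2'; rewrite /A d1 d2 /=.
  case: eqP => [E1|_]; last by move=> E; move: b'ne; rewrite E eqxx.
  case: eqP => [E2|_] _; last by move=> E; move: c'ne; rewrite E eqxx.
  have Edc : d = c by rewrite [d]surjective_pairing E1 E2 -surjective_pairing.
  by move: cJ; rewrite -Edc dJ.
have VI : 1 <= Val P (Instance (@fpair n @: setT) (fun _ => (1 : R))) A.
  rewrite /Val /= (bigD1 c) //= /A c1 eqxx c2 /= eqxx Pbc mul1r.
  rewrite lerDl; apply: sumr_ge0 => d _; rewrite mul1r; exact: ler0n.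
move: h; rewrite VJ.
have : 0 < (1 - eps) by rewrite subr_gt0.
move=> p; rewrite leNgt => /negP; apply.
apply: mulr_gt0 => //; exact: lt_le_trans ltr01 VI.
Qed.
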